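(* Let $k\geq 3$ be an odd integer and let $G$ be a bipartite graph. If $|V(G)|$ is odd, then $mp^{k}(G)=smp^{k}(G)=0$. If $|V(G)|$ is even, then $mp^{k}(G)=mp(G)$ and $smp^{k}(G)\leq smp(G)$.
   Context: All graphs are finite and simple; $\Gamma(v)$ is the set of edges incident with $v$. An integer $k$-matching of $G$ is a function $h:E(G)\to\{0,1,\dots,k\}$ with $\sum_{e\in\Gamma(v)}h(e)\leq k$ for all $v$; it is perfect if every vertex has $\sum_{e\in\Gamma(v)}h(e)=k$, and almost perfect if exactly one vertex $v'$ has $\sum_{e\in\Gamma(v')}h(e)=k-1$ and all other vertices have sum $k$. For $F\subseteq V(G)\cup E(G)$, $G-F$ is obtained by deleting the vertices of $F$ (with incident edges) and the edges of $F$. $mp^{k}(G)$ (resp. $smp^{k}(G)$) is the minimum size of a set $F\subseteq E(G)$ (resp. $F\subseteq V(G)\cup E(G)$) such that $G-F$ has neither a perfect nor an almost perfect integer $k$-matching. $mp(G)$ (resp. $smp(G)$) is the minimum size of a set $F\subseteq E(G)$ (resp. $F\subseteq V(G)\cup E(G)$) such that $G-F$ has neither a perfect matching nor an almost perfect matching (a matching leaving exactly one vertex unsaturated). *)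

(* Defs.v *)
From mathcomp Require Import all_boot.
Set Implicit Arguments. Unset Strict Implicit. Unset Printing Implicit Defensive.

(* A finite simple graph on vertex set V : {set T} (T a finType), with edge set
   E : {set {set T}} consisting of 2-element subsets of V. *)
Definition wf_graph (T : finType) (V : {set T}) (E : {set {set T}}) : Prop :=
  forall e, e \in E -> e \subset V /\ #|e| = 2.

Definition bipartite (T : finType) (V : {set T}) (E : {set {set T}}) : Prop :=
  exists A B : {set T}, A :&: B = set0 /\ A :|: B = V /\
    forall e, e \in E -> #|e :&: A| = 1 /\ #|e :&: B| = 1.

(* G - F, for F = FV (vertices) union FE (edges) *)
Definition delV (T : finType) (V FV : {set T}) : {set T} := V :\: FV.
Definition delE (T : finType) (V FV : {set T}) (E FE : {set {set T}}) : {set {set T}} :=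
  [set e in E :\: FE | e \subset V :\: FV].

Definition hsum (T : finType) (E : {set {set T}}) (h : {set T} -> nat) (v : T) : nat :=
  \sum_(e in E | v \in e) h e.

Definition int_kmatching (T : finType) (k : nat) (V : {set T}) (E : {set {set T}})
    (h : {set T} -> nat) : Prop :=
  (forall e, e \in E -> h e <= k) /\ (forall v, v \in V -> hsum E h v <= k).

Definition has_perfect_kmatching (T : finType) (k : nat) (V : {set T}) (E : {set {set T}}) : Prop :=
  exists h, int_kmatching k V E h /\ forall v, v \in V -> hsum E h v = k.

Definition has_almost_perfect_kmatching (T : finType) (k : nat) (V : {set T}) (E : {set {set T}}) : Prop :=
  exists h, int_kmatching k V E h /\
    exists v', v' \in V /\ hsum E h v' = k.-1 /\
      forall v, v \in V -> v != v' -> hsum E h v = k.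

Definition matching (T : finType) (E M : {set {set T}}) : Prop :=
  M \subset E /\ forall e1 e2, e1 \in M -> e2 \in M -> e1 != e2 -> [disjoint e1 & e2].

Definition saturated (T : finType) (M : {set {set T}}) (v : T) : Prop :=
  exists2 e, e \in M & v \in e.

Definition has_perfect_matching (T : finType) (V : {set T}) (E : {set {set T}}) : Prop :=
  exists M, matching E M /\ forall v, v \in V -> saturated M v.

Definition has_almost_perfect_matching (T : finType) (V : {set T}) (E : {set {set T}}) : Prop :=
  exists M, matching E M /\ exists v', v' \in V /\ ~ saturated M v' /\
    forall v, v \in V -> v != v' -> saturated M v.

Definition no_pk (T : finType) (k : nat) (V : {set T}) (E : {set {set T}}) : Prop :=
  ~ has_perfect_kmatching k V E /\ ~ has_almost_perfect_kmatching k V E.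

Definition no_p (T : finType) (V : {set T}) (E : {set {set T}}) : Prop :=
  ~ has_perfect_matching V E /\ ~ has_almost_perfect_matching V E.

Definition is_mpk (T : finType) (k : nat) (V : {set T}) (E : {set {set T}}) (n : nat) : Prop :=
  (exists FE : {set {set T}}, FE \subset E /\ #|FE| = n /\ no_pk k V (delE V set0 E FE)) /\
  (forall FE : {set {set T}}, FE \subset E -> no_pk k V (delE V set0 E FE) -> n <= #|FE|).

Definition is_mp (T : finType) (V : {set T}) (E : {set {set T}}) (n : nat) : Prop :=
  (exists FE : {set {set T}}, FE \subset E /\ #|FE| = n /\ no_p V (delE V set0 E FE)) /\
  (forall FE : {set {set T}}, FE \subset E -> no_p V (delE V set0 E FE) -> n <= #|FE|).

Definition is_smpk (T : finType) (k : nat) (V : {set T}) (E : {set {set T}}) (n : nat) : Prop :=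
  (exists (FV : {set T}) (FE : {set {set T}}), FV \subset V /\ FE \subset E /\ #|FV| + #|FE| = n /\
      no_pk k (delV V FV) (delE V FV E FE)) /\
  (forall (FV : {set T}) (FE : {set {set T}}), FV \subset V -> FE \subset E ->
      no_pk k (delV V FV) (delE V FV E FE) -> n <= #|FV| + #|FE|).

Definition is_smp (T : finType) (V : {set T}) (E : {set {set T}}) (n : nat) : Prop :=
  (exists (FV : {set T}) (FE : {set {set T}}), FV \subset V /\ FE \subset E /\ #|FV| + #|FE| = n /\
      no_p (delV V FV) (delE V FV E FE)) /\
  (forall (FV : {set T}) (FE : {set {set T}}), FV \subset V -> FE \subset E ->
      no_p (delV V FV) (delE V FV E FE) -> n <= #|FV| + #|FE|).

(* Main.v *)
Require Import Defs.
From mathcomp Require Import all_boot zify.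
From Stdlib Require Import Classical.
Set Implicit Arguments. Unset Strict Implicit. Unset Printing Implicit Defensive.

Lemma sum_side_gen (T : finType) (F : {set {set T}}) (X : {set T}) (h : {set T} -> nat) (P : pred {set T}) :
  (forall e, e \in F -> #|e :&: X| = 1) ->
  \sum_(y in X) \sum_(e in F | P e && (y \in e)) h e = \sum_(e in F | P e) h e.
Proof.
move=> H.
under eq_bigr do rewrite big_mkcondr /=.
rewrite exchange_big /= [RHS]big_mkcondr /=.
apply: eq_bigr => e eF.
case: (P e) => /=; last by rewrite big1.
rewrite -big_mkcondr /= (eq_bigl (mem (e :&: X))); last first.
  by move=> y; rewrite !inE andbC.
by rewrite sum_nat_const H // mul1n.
Qed.

Lemma sum_sub (T : finType) (S A : {set T}) (g : T -> nat) :
  S \subset A -> \sum_(x in S) g x <= \sum_(x in A) g x.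
Proof.
move=> SA; rewrite [X in _ <= X](bigID (mem S)) /=.
rewrite [X in _ <= X + _](eq_bigl (mem S)); first exact: leq_addr.
move=> x /=; apply/andP/idP => [[]//|xS]; split=> //; exact: (subsetP SA).
Qed.

Definition nb (T : finType) (R : rel T) (B S : {set T}) := [set y in B | [exists x in S, R x y]].

Lemma nb_sub (T : finType) (R : rel T) B S : nb R B S \subset B.
Proof. by apply/subsetP => y; rewrite inE => /andP[]. Qed.

Lemma hall (T : finType) (R : rel T) n : forall A B : {set T}, #|A| <= n ->
  (forall S : {set T}, S \subset A -> #|S| <= #|nb R B S|) ->
  exists f : T -> T, (forall x, x \in A -> (f x \in B) && R x (f x)) /\ {in A &, injective f}.
Proof.
elim: n => [|n IH] A B hA hH.
  exists id; split => [x xA|x y xA]; first by move: hA; rewrite leqn0 => /eqP/card0_eq/(_ x); rewrite xA.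
  by move: hA; rewrite leqn0 => /eqP/card0_eq/(_ x); rewrite xA.
have [A0|[a aA]] := set_0Vmem A.
  by exists id; split => [x|x y]; rewrite A0 inE.
case: (boolP [exists S : {set T}, [&& S \subset A, S != set0, S != A & #|nb R B S| <= #|S|]]).
- case/existsP => S /and4P[SA Sn0 SnA tight].
  have ltSA : #|S| < #|A|.
    rewrite ltn_neqAle subset_leq_card // andbT.
    by apply: contra SnA => /eqP e; rewrite eqEcard SA e leqnn.
  have [f1 [f1P f1I]] : exists f : T -> T, (forall x, x \in S -> (f x \in nb R B S) && R x (f x)) /\ {in S &, injective f}.
    apply: IH; first by rewrite -ltnS (leq_trans ltSA).
    move=> S' S'S; apply: (leq_trans (hH S' (subset_trans S'S SA))).
    apply: subset_leq_card; apply/subsetP => y; rewrite !inE => /andP[yB /existsP[x /andP[xS' Rxy]]].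
    rewrite yB /=; apply/andP; split; last by apply/existsP; exists x; rewrite xS'.
    by apply/existsP; exists x; rewrite (subsetP S'S) .
  have [f2 [f2P f2I]] : exists f : T -> T, (forall x, x \in A :\: S -> (f x \in B :\: nb R B S) && R x (f x)) /\ {in A :\: S &, injective f}.
    apply: IH.
      rewrite cardsD (setIidPr SA) -ltnS (leq_trans _ hA) //.
      have: 0 < #|S| by rewrite card_gt0.
      move: ltSA; lia.
    move=> S' S'A.
    have dis : S' :&: S = set0.
      apply/setP => x; rewrite !inE; apply/negbTE; apply/andP => [[xS' xS]].
      by move: (subsetP S'A x xS'); rewrite inE xS.
    have h1 : #|S' :|: S| <= #|nb R B (S' :|: S)|.
      by apply: hH; rewrite subUset SA (subset_trans S'A) // subsetDl.
    have e1 : nb R B (S' :|: S) = nb R B S' :|: nb R B S.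
      apply/setP => y; rewrite !inE; case: (y \in B) => //=.
      apply/existsP/orP => [[x]|[]/existsP[x /andP[xs r]]].
        by rewrite inE => /andP[/orP[] xs r]; [left|right]; apply/existsP; exists x; rewrite xs.
      - by exists x; rewrite inE xs.
      - by exists x; rewrite inE xs orbT.
    have e2 : nb R (B :\: nb R B S) S' = nb R B S' :\: nb R B S.
      by apply/setP => y; rewrite !inE; case: (y \in B); case: [exists x in S, R x y]; rewrite ?andbF ?andbT.
    rewrite e2 cardsD.
    have cU : #|S' :|: S| = #|S'| + #|S| by rewrite -cardsUI dis cards0 addn0.
    have cU2 := cardsUI (nb R B S') (nb R B S).
    move: h1; rewrite e1 cU => h1.
    have : #|nb R B S' :&: nb R B S| <= #|nb R B S| by rewrite subset_leq_card // subsetIr.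
    move: tight h1 cU2; lia.
  exists (fun x => if x \in S then f1 x else f2 x); split.
    move=> x xA; case: ifP => xS.
      by case/andP: (f1P x xS); rewrite inE => /andP[-> _] ->.
    have: x \in A :\: S by rewrite inE xS xA.
    by move/f2P; rewrite inE => /andP[/andP[_ ->] ->].
  move=> x y xA yA; case: ifP => xS; case: ifP => yS.
  - exact: f1I.
  - move=> e; have: y \in A :\: S by rewrite inE yS yA.
    move/f2P; rewrite -e inE => /andP[/andP[]]; case/andP: (f1P x xS) => ->.
    by [].
  - move=> e; have: x \in A :\: S by rewrite inE xS xA.
    move/f2P; rewrite e inE => /andP[/andP[]]; case/andP: (f1P y yS) => ->.
    by [].
  - by apply: f2I; rewrite inE ?xS ?yS ?xA ?yA.
- rewrite negb_exists => /forallP hS.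
  have : 0 < #|nb R B [set a]|.
    by apply: leq_trans (hH _ _); rewrite ?cards1 // sub1set.
  rewrite card_gt0 => /set0Pn[b]; rewrite inE => /andP[bB /existsP[a' /andP[]]].
  rewrite inE => /eqP -> Rab.
  have [f1 [f1P f1I]] : exists f : T -> T, (forall x, x \in A :\ a -> (f x \in B :\ b) && R x (f x)) /\ {in A :\ a &, injective f}.
    apply: IH.
      by move: hA; rewrite (cardsD1 a) aA.
    move=> S SA.
    have [->|Sn0] := eqVneq S set0; first by rewrite cards0.
    have SA' : S \subset A by apply: subset_trans SA (subsetDl _ _).
    have SnA : S != A.
      by apply/eqP => e; move: (subsetP SA a); rewrite e aA !inE eqxx => /(_ isT).
    have := hS S; rewrite SA' Sn0 SnA /= -ltnNge => lt.
    have e2 : nb R (B :\ b) S = nb R B S :\ b.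
      by apply/setP => y; rewrite !inE; case: (y \in B); rewrite ?andbF ?andbT.
    rewrite e2; move: lt; rewrite (cardsD1 b (nb R B S)).
    case: (b \in nb R B S) => /=; lia.
  exists (fun x => if x == a then b else f1 x); split.
    move=> x xA; case: eqP => [->|/eqP xa]; first by rewrite bB.
    have : x \in A :\ a by rewrite !inE xa.
    by move/f1P; rewrite !inE => /andP[/andP[_ ->] ->].
  move=> x y xA yA; case: eqP => [->|/eqP xa]; case: eqP => [->|/eqP ya] //.
  - move=> e; have : y \in A :\ a by rewrite !inE ya.
    by move/f1P; rewrite -e !inE eqxx.
  - move=> e; have : x \in A :\ a by rewrite !inE xa.
    by move/f1P; rewrite e !inE eqxx.
  - by apply: f1I; rewrite !inE ?xa ?ya.
Qed.

Definition bipg (T : finType) (W : {set T}) (F : {set {set T}}) (A B : {set T}) :=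
  A :&: B = set0 /\ A :|: B = W /\
  forall e, e \in F -> e \subset W /\ #|e :&: A| = 1 /\ #|e :&: B| = 1.

Lemma bip_sub (T : finType) (V : {set T}) (E : {set {set T}}) (FV : {set T}) (FE : {set {set T}}) (A B : {set T}) :
  A :&: B = set0 -> A :|: B = V -> (forall e, e \in E -> #|e :&: A| = 1 /\ #|e :&: B| = 1) ->
  bipg (V :\: FV) (delE V FV E FE) (A :&: (V :\: FV)) (B :&: (V :\: FV)).
Proof.
move=> hI hU hE; split; last split.
- by rewrite setIACA hI set0I.
- by rewrite -setIUl hU; apply/setIidPr; rewrite subsetDl.
- move=> e; rewrite /delE !inE => /andP[/andP[_ eE] eW].
  have [h1 h2] := hE e eE.
  by rewrite !setIA !(setIidPl (subset_trans (subsetIl _ _) eW)) eW.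
Qed.

Lemma card_W (T : finType) (W : {set T}) (F : {set {set T}}) (A B : {set T}) : bipg W F A B -> #|W| = #|A| + #|B|.
Proof. by case=> hI [hU _]; rewrite -hU -cardsUI hI cards0 addn0. Qed.

Lemma sum_side (T : finType) (F : {set {set T}}) (X : {set T}) (h : {set T} -> nat) :
  (forall e, e \in F -> #|e :&: X| = 1) ->
  \sum_(y in X) hsum F h y = \sum_(e in F) h e.
Proof.
move=> H; have := sum_side_gen h predT H.
have -> : \sum_(e in F | predT e) h e = \sum_(e in F) h e by apply: eq_bigl => e; rewrite /= andbT.
move=> <-; apply: eq_bigr => y _; rewrite /hsum; apply: eq_bigl => e //.
Qed.

Lemma count_side (T : finType) (W : {set T}) (F : {set {set T}}) (A B : {set T}) h : bipg W F A B ->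
  \sum_(v in A) hsum F h v = \sum_(v in B) hsum F h v.
Proof.
case=> _ [_ hE].
by rewrite (sum_side h) ?(sum_side h) // => e /hE[_ []].
Qed.

Lemma sum_exc (T : finType) (F : {set {set T}}) h k (X : {set T}) v' c :
  (forall v, v \in X -> v != v' -> hsum F h v = k) -> hsum F h v' = c ->
  \sum_(v in X) hsum F h v = (if v' \in X then c + k * (#|X| - 1) else k * #|X|).
Proof.
move=> hk hc; case: ifP => vX.
  rewrite (bigD1 v') //= hc (eq_bigr (fun _ => k)); last by move=> v /andP[]; exact: hk.
  rewrite (eq_bigl (mem (X :\ v'))); last by move=> v; rewrite !inE andbC.
  by rewrite sum_nat_const (cardsD1 v' X) vX add1n subn1 /= mulnC.
rewrite (eq_bigr (fun _ => k)); first by rewrite sum_nat_const mulnC.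
move=> v vx; apply: hk => //.
by apply: contraTneq vx => ->; rewrite vX.
Qed.

Lemma pk_card (T : finType) k (W : {set T}) (F : {set {set T}}) (A B : {set T}) : 0 < k -> bipg W F A B ->
  has_perfect_kmatching k W F -> #|A| = #|B|.
Proof.
move=> k0 hb [h [_ hp]].
have hA : forall X : {set T}, X \subset W -> \sum_(v in X) hsum F h v = k * #|X|.
  move=> X XW; rewrite (eq_bigr (fun _ => k)); first by rewrite sum_nat_const mulnC.
  move=> v vX.
  exact: hp (subsetP XW v vX).
case: (hb) => _ [hU _].
have := count_side h hb; rewrite !hA -?hU ?subsetUl ?subsetUr //.
by move/eqP; rewrite eqn_pmul2l // => /eqP.
Qed.

Lemma apk_eq (T : finType) k (W : {set T}) (F : {set {set T}}) (A B : {set T}) h v' c : bipg W F A B ->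
  v' \in W -> hsum F h v' = c -> (forall v, v \in W -> v != v' -> hsum F h v = k) ->
  (v' \in A /\ c + k * (#|A| - 1) = k * #|B|) \/ (v' \in B /\ c + k * (#|B| - 1) = k * #|A|).
Proof.
move=> hb vW hc hk; have := count_side h hb.
case: (hb) => hI [hU _].
have sA : forall X : {set T}, X \subset W -> forall v, v \in X -> v != v' -> hsum F h v = k.
  by move=> X XW v vX; apply: hk; exact: (subsetP XW).
rewrite (sum_exc (sA A _) hc) ?(sum_exc (sA B _) hc) -?hU ?subsetUl ?subsetUr //.
move: vW; rewrite -hU inE => /orP[] vX.
  have vB : v' \notin B by apply/negP => vB; move/setP: hI => /(_ v'); rewrite !inE vX vB.
  by rewrite vX (negbTE vB); left.
have vA : v' \notin A by apply/negP => vA; move/setP: hI => /(_ v'); rewrite !inE vX vA.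
by rewrite vX (negbTE vA); right.
Qed.

Lemma no_apk (T : finType) k (W : {set T}) (F : {set {set T}}) (A B : {set T}) : 2 <= k -> bipg W F A B ->
  ~ has_almost_perfect_kmatching k W F.
Proof.
move=> k2 hb [h [_ [v' [vW [hc hk]]]]].
have key : forall a b, k.-1 + k * a = k * b -> False.
  move=> a b; case: (leqP b a) => ba.
    have : k * b <= k * a by rewrite leq_mul2l ba orbT.
    lia.
  have : k * a.+1 <= k * b by rewrite leq_mul2l ba orbT.
  rewrite mulnS; lia.
by case: (apk_eq hb vW hc hk) => [[_]|[_]] /key.
Qed.

Lemma msum_sat (T : finType) (F M : {set {set T}}) k v : matching F M -> saturated M v ->
  hsum F (fun e => if e \in M then k else 0) v = k.
Proof.
move=> [MF hd] [e0 e0M ve0].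
rewrite /hsum (bigD1 e0) /=; last by rewrite (subsetP MF) // ve0.
rewrite e0M big1 ?addn0 // => e /andP[/andP[_ ve] ne].
case: ifP => // eM.
by rewrite (disjointFr (hd _ _ eM e0M ne) ve) in ve0.
Qed.

Lemma msum_unsat (T : finType) (F M : {set {set T}}) k v : ~ saturated M v ->
  hsum F (fun e => if e \in M then k else 0) v = 0.
Proof.
move=> ns; rewrite /hsum big1 // => e /andP[_ ve]; case: ifP => // eM.
by case: ns; exists e.
Qed.

Lemma pm_pk (T : finType) k (W : {set T}) (F : {set {set T}}) :
  has_perfect_matching W F -> has_perfect_kmatching k W F.
Proof.
move=> [M [hm hs]]; exists (fun e => if e \in M then k else 0); split; last first.
  by move=> v vW; apply: msum_sat => //; exact: hs.
split; first by move=> e _; case: ifP.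
by move=> v vW; rewrite (msum_sat _ hm (hs v vW)).
Qed.

Lemma apm_odd (T : finType) (W : {set T}) (F : {set {set T}}) A B : bipg W F A B ->
  has_almost_perfect_matching W F -> odd #|W|.
Proof.
move=> hb [M [hm [v' [vW [ns hs]]]]].
have hc := msum_unsat F 1 ns.
have hk : forall v, v \in W -> v != v' -> hsum F (fun e => if e \in M then 1 else 0) v = 1.
  by move=> v vW' nv; apply: msum_sat => //; exact: hs.
rewrite (card_W hb).
have c1 : forall X : {set T}, v' \in X -> 0 < #|X| by move=> X vX; rewrite card_gt0; apply/set0Pn; exists v'.
case: (apk_eq hb vW hc hk) => [[vA e]|[vB e]].
- have := c1 _ vA; move: e; rewrite !mul1n add0n => e h1.
  have -> : #|A| = #|B|.+1 by lia.
  by rewrite addSn /= addnn odd_double.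
- have := c1 _ vB; move: e; rewrite !mul1n add0n => e h1.
  have -> : #|B| = #|A|.+1 by lia.
  by rewrite addnS /= addnn odd_double.
Qed.

Lemma one_el (T : finType) (C : {set T}) a b : #|C| = 1 -> a \in C -> b \in C -> a = b.
Proof. by move/eqP/cards1P => [w ->]; rewrite !inE => /eqP -> /eqP ->. Qed.

Lemma pk_pm (T : finType) k (W : {set T}) (F : {set {set T}}) (A B : {set T}) : 0 < k -> bipg W F A B ->
  has_perfect_kmatching k W F -> has_perfect_matching W F.
Proof.
move=> k0 hb hp.
have cAB := pk_card k0 hb hp.
case: hp => h [_ hp].
case: (hb) => hI [hU hE].
have AW : A \subset W by rewrite -hU subsetUl.
have BW : B \subset W by rewrite -hU subsetUr.
have dAB : forall a, a \in A -> a \in B -> False.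
  by move=> a aA aB; move/setP: hI => /(_ a); rewrite !inE aA aB.
pose R : rel T := fun x y => [exists e in F, (x \in e) && (y \in e)].
have key : forall x, \sum_(y in B) \sum_(e in F | (x \in e) && (y \in e)) h e = hsum F h x.
  by move=> x; apply: (sum_side_gen h (fun e => x \in e)) => e /hE[_ []].
have key2 : forall y, \sum_(x in A) \sum_(e in F | (x \in e) && (y \in e)) h e = hsum F h y.
  move=> y; have := sum_side_gen h (fun e => y \in e) (X := A) (F := F); rewrite /hsum.
  move=> <-; last by move=> e /hE[_ []].
  by apply: eq_bigr => x _; apply: eq_bigl => e /=; rewrite [(x \in e) && _]andbC.
have ksum : forall X : {set T}, X \subset W -> k * #|X| = \sum_(x in X) hsum F h x.
  move=> X XW; rewrite (eq_bigr (fun _ => k)); first by rewrite sum_nat_const mulnC.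
  by move=> v vX; exact: hp (subsetP XW v vX).
have hall_c : forall S : {set T}, S \subset A -> #|S| <= #|nb R B S|.
  move=> S SA; rewrite -(leq_pmul2l k0).
  have NW : nb R B S \subset W := subset_trans (nb_sub R B S) BW.
  rewrite (ksum _ (subset_trans SA AW)) (ksum _ NW).
  have step1 : \sum_(x in S) hsum F h x =
     \sum_(x in S) \sum_(y in nb R B S) \sum_(e in F | (x \in e) && (y \in e)) h e.
    apply: eq_bigr => x xS; rewrite -key (bigID (mem (nb R B S))) /=.
    rewrite [X in _ + X]big1 ?addn0.
      apply: eq_bigl => y; apply/andP/idP => [[]//|yN]; split=> //.
      exact: (subsetP (nb_sub R B S)).
    move=> y /andP[yB yN]; apply: big1 => e /andP[eF /andP[xe ye]].
    exfalso; move: yN; rewrite inE yB /=; case/negP; apply/existsP; exists x.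
    by rewrite xS /R; apply/existsP; exists e; rewrite eF xe ye.
  rewrite step1 exchange_big /=; apply: leq_sum => y yN.
  by rewrite -key2; apply: sum_sub.
have [f [fP fI]] := hall (n := #|A|) (leqnn _) hall_c.
pose g x := odflt set0 [pick e in F | (x \in e) && (f x \in e)].
have gP : forall x, x \in A -> [/\ g x \in F, x \in g x & f x \in g x].
  move=> x xA; case/andP: (fP x xA) => _ /existsP[e0 /andP[e0F /andP[xe0 fe0]]].
  rewrite /g; case: pickP => [e /andP[eF /andP[xe fe]]|/(_ e0)] //=.
  by rewrite e0F xe0 fe0.
have gE : forall x z, x \in A -> z \in g x -> z = x \/ z = f x.
  move=> x z xA zg; have [gF xg fg] := gP x xA.
  have [gW [c1 c2]] := hE _ gF.
  move: (subsetP gW z zg); rewrite -hU inE => /orP[] zX.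
    by left; apply: (one_el c1); rewrite inE ?zg ?xg.
  right; apply: (one_el c2); rewrite inE ?zg ?fg //.
  by case/andP: (fP x xA).
exists (g @: A); split; first split.
- by apply/subsetP => e /imsetP[x xA ->]; case: (gP x xA).
- move=> e1 e2 /imsetP[x1 x1A ->] /imsetP[x2 x2A ->] ne.
  rewrite -setI_eq0; apply/eqP/setP => z; rewrite !inE; apply/negbTE/andP => [[z1 z2]].
  have fB : forall x, x \in A -> f x \in B by move=> x /fP/andP[].
  case: (gE _ _ x1A z1) => ez1; case: (gE _ _ x2A z2) => ez2; have e := etrans (esym ez1) ez2.
  + by move: ne; rewrite e eqxx.
  + by apply: (dAB x1 x1A); rewrite e fB.
  + by apply: (dAB x2 x2A); rewrite -e fB.
  + by move: ne; rewrite (fI _ _ x1A x2A e) eqxx.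
- move=> v; rewrite -hU inE => /orP[] vX.
    by exists (g v); [apply/imsetP; exists v | case: (gP v vX)].
  have fAB : f @: A \subset B by apply/subsetP => y /imsetP[x /fP/andP[xB _] ->].
  have : f @: A == B.
    rewrite eqEcard fAB /=.
    by rewrite card_in_imset // cAB.
  move/eqP => eB; move: vX; rewrite -eB => /imsetP[x xA ->].
  by exists (g x); [apply/imsetP; exists x | case: (gP x xA)].
Qed.

Lemma minP (P : nat -> Prop) : forall n b, b <= n -> P b ->
  exists a, P a /\ (forall m, P m -> a <= m) /\ a <= b.
Proof.
elim => [|n IH] b bn Pb.
  by exists b; split => //; split => [m _|//]; move: bn; lia.
case: (classic (exists m, m < b /\ P m)) => [[m [mb Pm]]|nm].
  have [a [Pa [amin ab]]] := IH m (ltac:(lia)) Pm.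
  by exists a; split => //; split => //; lia.
exists b; split => //; split => // m Pm; rewrite leqNgt; apply/negP => mb.
by apply: nm; exists m.
Qed.

Theorem theorem3p13 (T : finType) (k : nat) (V : {set T}) (E : {set {set T}}) :
  3 <= k -> odd k -> wf_graph V E -> bipartite V E ->
  (odd #|V| -> is_mpk k V E 0 /\ is_smpk k V E 0) /\
  (~~ odd #|V| ->
     (forall n, is_mpk k V E n <-> is_mp V E n) /\
     (forall b, is_smp V E b -> exists a, is_smpk k V E a /\ a <= b)).
Proof.
move=> k3 ko wf [A [B [hI [hU hE]]]].
have k0 : 0 < k by lia.
have k2 : 2 <= k by lia.
have bs := fun FV FE => bip_sub FV FE hI hU hE.
split.
  move=> oV.
  have nopk : forall FE, no_pk k V (delE V set0 E FE).
    move=> FE; have hb := bs set0 FE; rewrite setD0 in hb; split.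
      move=> hp; have := pk_card k0 hb hp; have := card_W hb.
      move=> cV e; move: oV; rewrite cV e addnn odd_double.
      by [].
    exact: no_apk k2 hb.
  split; split => //.
    by exists set0; rewrite sub0set cards0; split => //; split => //.
  exists set0, set0; rewrite !sub0set !cards0; split => //; split => //; split => //.
  by rewrite /delV setD0; apply: nopk.
move=> eV.
have eqv : forall FV FE, no_p (delV V FV) (delE V FV E FE) -> no_pk k (delV V FV) (delE V FV E FE).
  move=> FV FE [np nap]; have hb := bs FV FE; split.
    by move=> hp; apply: np; exact: pk_pm k0 hb hp.
  exact: no_apk k2 hb.
split.
  have eqv2 : forall FE, no_pk k V (delE V set0 E FE) <-> no_p V (delE V set0 E FE).
    move=> FE; have hb := bs set0 FE; rewrite setD0 in hb; split.
      move=> [npk _]; split; first by move=> /(pm_pk k).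
      by move/(apm_odd hb); rewrite (negbTE eV).
    by move=> hn; have := eqv set0 FE; rewrite /delV setD0; apply.
  move=> n; split => [[[FE [h1 [h2 h3]]] hm]|[[FE [h1 [h2 h3]]] hm]]; split.
  - by exists FE; split => //; split => //; apply/eqv2.
  - by move=> FE' s h; apply: hm s _; apply/eqv2.
  - by exists FE; split => //; split => //; apply/eqv2.
  - by move=> FE' s h; apply: hm s _; apply/eqv2.
move=> b [[FV [FE [s1 [s2 [sz h]]]]] _].
pose P m := exists (FV : {set T}) (FE : {set {set T}}), FV \subset V /\ FE \subset E /\ #|FV| + #|FE| = m /\
  no_pk k (delV V FV) (delE V FV E FE).
have Pb : P b by exists FV, FE; split => //; split => //; split => //; apply: eqv.
have [a [Pa [amin ab]]] := minP (leqnn b) Pb.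
exists a; split => //; split => //.
move=> FV' FE' s1' s2' h'; apply: amin; exists FV', FE'; do 3 (split => //).
Qed.
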